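(* Let $\mathcal{P}=\{p_1>p_2>\cdots>p_k\}$ be a finite nonempty set of positive integers. Then the pair $(\mathcal{P},\mathcal{P})$ is bigraphic, and there is a bipartite graph realizing $(\mathcal{P},\mathcal{P})$ in which each stable set has exactly $p_1$ vertices; moreover, such a graph can be chosen to be a mirror bipartite graph.
   Context: For finite sets of integers $\mathcal{P}=\{p_1>\cdots>p_{k_1}\}$ and $\mathcal{Q}=\{q_1>\cdots>q_{k_2}\}$, a bipartite graph $G$ with stable sets $V_1,V_2$ realizes the pair $(\mathcal{P},\mathcal{Q})$ if the set of degrees of vertices in $V_1$ is exactly $\mathcal{P}$ (each $p_i$ occurring at least once, and no other value occurring) and the set of degrees of vertices in $V_2$ is exactly $\mathcal{Q}$; the pair is bigraphic if such $G$ exists. A bipartite graph $G=(V_1\cup V_2,E)$ is mirror if there is a bijection $\varphi:V_1\to V_2$ with $u\varphi(v)\in E \iff \varphi(u)v\in E$ for all $u,v\in V_1$. *)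

(* Defs.v *)
From mathcomp Require Import all_boot.
Set Implicit Arguments. Unset Strict Implicit. Unset Printing Implicit Defensive.

(* A bipartite graph with stable sets V1 = 'I_n1 and V2 = 'I_n2 is given by
   its edge relation E : 'I_n1 -> 'I_n2 -> bool (E u v  <->  uv is an edge). *)

Definition deg1 n1 n2 (E : 'I_n1 -> 'I_n2 -> bool) (u : 'I_n1) : nat :=
  #|[set v : 'I_n2 | E u v]|.
Definition deg2 n1 n2 (E : 'I_n1 -> 'I_n2 -> bool) (v : 'I_n2) : nat :=
  #|[set u : 'I_n1 | E u v]|.

Definition realizes n1 n2 (E : 'I_n1 -> 'I_n2 -> bool) (P Q : seq nat) : Prop :=
  (forall d, d \in P <-> exists u, deg1 E u = d) /\
  (forall d, d \in Q <-> exists v, deg2 E v = d).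

Definition bigraphic (P Q : seq nat) : Prop :=
  exists n1 n2 (E : 'I_n1 -> 'I_n2 -> bool), realizes E P Q.

Definition mirror n1 n2 (E : 'I_n1 -> 'I_n2 -> bool) : Prop :=
  exists phi : 'I_n1 -> 'I_n2, bijective phi /\
    forall u v : 'I_n1, E u (phi v) = E v (phi u).

(* Main.v *)
Require Import Defs.
From mathcomp Require Import all_boot.
From mathcomp Require Import zify.

Lemma max_in (s : seq nat) : s != [::] -> \max_(p <- s) p \in s.
Proof.
elim: s => [//|x s IH] _; rewrite big_cons.
case: s IH => [|y s] IH; first by rewrite big_nil maxn0 inE.
have /IH H : y :: s != [::] by [].
rewrite /maxn; case: ifP => _; first by rewrite inE H orbT.
by rewrite inE eqxx.
Qed.

Lemma card_lt m q : q <= m -> #|[set v : 'I_m | v < q]| = q.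
Proof.
move=> qm.
have -> : [set v : 'I_m | v < q] = [set widen_ord qm i | i in 'I_q].
  apply/setP => v; rewrite inE; apply/idP/imsetP.
    by move=> vq; exists (Ordinal vq) => //; apply: val_inj.
  by case=> i _ ->; rewrite /= ltn_ord.
rewrite card_imset ?card_ord //.
by move=> i j /(congr1 val) /= /val_inj.
Qed.

Lemma count_split (p q r : pred nat) (s : seq nat) :
  (forall x, (p x : nat) = q x + r x) -> count p s = count q s + count r s.
Proof.
move=> H; elim: s => //= x s ->; rewrite H.
by rewrite !addnA; congr (_ + _); rewrite -!addnA; congr (_ + _); rewrite addnC.
Qed.

Section Main.
Variables (P : seq nat) (m : nat).
Hypotheses (Pu : uniq P) (Ppos : all (fun p => 0 < p) P) (mP : m \in P)
  (Pm : forall q, q \in P -> q <= m).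

Definition r (u : nat) := count (fun x => x <= u) P.
Definition c (q : nat) := count (fun x => x < q) P.
Definition k := size P.

Lemma r_c q v : q \in P -> (r v < (c q).+1) = (v < q).
Proof.
move=> qP; rewrite ltnS; case: (ltnP v q) => h.
  by apply: sub_count => x /= xv; apply: leq_ltn_trans h.
apply/negbTE; rewrite -ltnNge.
apply: (@leq_trans (count (fun x => x <= q) P)); last first.
  by apply: sub_count => x /= xq; apply: leq_trans h.
have -> : count (fun x => x <= q) P = count (fun x => x < q) P + count (pred1 q) P.
  apply: count_split => x /=; case: (ltngtP x q) => //.
rewrite /c -addn1 leq_add2l -has_count; apply/hasP; exists q => //=.
Qed.

Lemma c_lt q : q \in P -> c q < k.
Proof.
move=> qP; rewrite /c /k -(count_predC (fun x => x < q) P).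
rewrite -[X in X < _]addn0 ltn_add2l -has_count; apply/hasP; exists q => //=.
by rewrite ltnn.
Qed.

Lemma c_inj : {in P &, injective c}.
Proof.
have H : forall a b, a \in P -> a < b -> c a < c b.
  move=> a b aP ab; rewrite /c.
  have E1 : count (fun x => x < b) P = count (fun x => x < a) P
     + count (fun x => (a <= x) && (x < b)) P.
    apply: count_split => y /=; case: (ltnP y a) => h /=.
      by rewrite (ltn_trans h ab).
    by rewrite add0n.
  have E2 : count (fun x => (a <= x) && (x < b)) P = count (pred1 a) P
     + count (fun x => (a < x) && (x < b)) P.
    apply: count_split => y /=; case: (ltngtP y a) => //= ->.
    by rewrite ab.
  rewrite E1 E2.
  have : 0 < count (pred1 a) P by rewrite -has_count; apply/hasP; exists a => //=.
  lia.
move=> a b aP bP e; case: (ltngtP a b) => // h.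
  by move: (H _ _ aP h); rewrite e ltnn.
by move: (H _ _ bP h); rewrite e ltnn.
Qed.

Lemma c_onto t : t < k -> exists2 q, q \in P & c q = t.
Proof.
move=> tk.
have U : uniq (map c P) by rewrite map_inj_in_uniq //; exact: c_inj.
have S : {subset map c P <= iota 0 k}.
  by move=> x /mapP [q qP ->]; rewrite mem_iota add0n c_lt.
have [_ E] := uniq_min_size U S (eq_leq (etrans (size_iota 0 k) (esym (size_map c P)))).
have : t \in iota 0 k by rewrite mem_iota.
by rewrite -E => /mapP [q qP ->]; exists q.
Qed.

Definition Er (u v : 'I_m) := r u + r v < k.

Lemma r_lt (u : 'I_m) : r u < k.
Proof.
rewrite /r /k -(count_predC (fun x => x <= u) P) -[X in X < _]addn0 ltn_add2l.
rewrite -has_count; apply/hasP; exists m => //=; by rewrite -ltnNge.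
Qed.


Lemma set_eq (u : 'I_m) q : q \in P -> r u + c q = k.-1 ->
  [set v : 'I_m | Er u v] = [set v : 'I_m | v < q].
Proof.
move=> qP h; apply/setP => v; rewrite !inE /Er -(r_c q (nat_of_ord v) qP).
have := r_lt u; have := c_lt q qP; lia.
Qed.

Lemma deg_in (u : 'I_m) : exists2 q, q \in P & #|[set v : 'I_m | Er u v]| = q.
Proof.
have ru := r_lt u.
have [q qP cq] := @c_onto (k.-1 - r u) ltac:(lia).
exists q => //; rewrite (@set_eq u q qP) ?card_lt ?Pm //; lia.
Qed.

Lemma deg_onto d : d \in P -> exists u : 'I_m, #|[set v : 'I_m | Er u v]| = d.
Proof.
move=> dP; have cd := c_lt d dP.
have [q qP cq] := @c_onto (k.-1 - c d) ltac:(lia).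
have q0 : 0 < q by move/allP: Ppos => /(_ q qP).
have qm := Pm q qP.
have um : q.-1 < m by lia.
exists (Ordinal um); rewrite (@set_eq _ d dP) ?card_lt ?Pm //=.
have -> : r q.-1 = c q.
  by apply: eq_count => x /=; rewrite -ltnS prednK.
lia.
Qed.

End Main.

Theorem theorem5 (P : seq nat) :
  P != [::] -> uniq P -> all (fun p => 0 < p) P ->
  bigraphic P P /\
  exists E : 'I_(\max_(p <- P) p) -> 'I_(\max_(p <- P) p) -> bool,
    realizes E P P /\ mirror E.
Proof.
move=> P0 Pu Ppos.
set m := \max_(p <- P) p.
have mP : m \in P by exact: max_in.
have Pm : forall q, q \in P -> q <= m by move=> q qP; exact: leq_bigmax_seq.
have R : realizes (@Er P m) P P.
  have D2 : forall v, deg2 (@Er P m) v = deg1 (@Er P m) v.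
    by move=> v; rewrite /deg1 /deg2; apply: eq_card => u; rewrite !inE /Er addnC.
  have H : forall d, d \in P <-> exists u, deg1 (@Er P m) u = d.
    move=> d; split; first exact: deg_onto.
    by case=> u <-; rewrite /deg1; have [q qP ->] := @deg_in P m Pu Ppos mP Pm u.
  split => // d; rewrite H; split; case=> u h; exists u; by rewrite ?D2 // -D2.
split; first by exists m, m, (@Er P m).
exists (@Er P m); split => //; exists id; split; first exact: (Bijective (g:=id)).
by move=> u v; rewrite /Er addnC.
Qed.
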